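(* Let $h>0$ and let $f_i, d_i, P_i, Q_i$ be real numbers with $P_i$ and $Q_i$ nonzero and of the same sign, i.e. $P_iQ_i>0$. For $k\in[0,1]$ define $$R(k) = f_i + d_i h k + \frac{P_i^2 k^2}{Q_i + (P_i - Q_i)k},\qquad C(k) = f_i + d_i h k + (2P_i - Q_i)k^2 + (Q_i - P_i)k^3,$$ and, for a weighting parameter $\alpha\in[0,1]$, $$F_\alpha(k) = \alpha R(k) + (1-\alpha) C(k),$$ regarded as a function of $x = x_i + kh$, so that $\partial^2 F_\alpha/\partial x^2 = h^{-2}\, d^2F_\alpha/dk^2$. Set $$M_i = \max\Big[2,\ \max\Big(\frac{Q_i}{P_i}, \frac{P_i}{Q_i}\Big)\Big],\qquad \alpha^* = \frac{M_i(M_i-2)}{M_i(M_i-2)+1}.$$ Then $\alpha^*\in[0,1)$, and for $\alpha\in[0,1]$ the interpolant $F_\alpha$ preserves the convexity of the data on the cell, i.e. $$\frac{\partial^2 F_\alpha(k)}{\partial x^2}\le 0 \text{ for all } k\in[0,1] \text{ when } P_i<0,\ Q_i<0,\qquad \frac{\partial^2 F_\alpha(k)}{\partial x^2}\ge 0 \text{ for all } k\in[0,1] \text{ when } P_i>0,\ Q_i>0,$$ if and only if $\alpha\ge\alpha^*$. In particular, $\alpha^*$ is the smallest such weighting parameter, and $\alpha^*=0$ (the purely cubic interpolant is convexity preserving) whenever $1/2\le Q_i/P_i\le 2$.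
   Context: This concerns a semi-Lagrangian (CIP-type) scheme for the 1D advection equation $f_t + u f_x = 0$ on a uniform grid of spacing $h$. On a cell $[x_i,x_{i+1}]$, $f_i, f_{i+1}$ are the values of the quantity and $d_i, d_{i+1}$ its first spatial derivatives at the grid points; $S_i=(f_{i+1}-f_i)/h$, $P_i=(S_i-d_i)h$, $Q_i=(d_{i+1}-S_i)h$. The data are convex on the cell when $d_i>S_i>d_{i+1}$ (i.e. $P_i<0,\ Q_i<0$) and concave when $d_i<S_i<d_{i+1}$ (i.e. $P_i>0,\ Q_i>0$). $k=-u_i\Delta t/h\in[0,1]$ is the local Courant number. $R$ is the rational (cubic-rational) interpolant and $C$ is the Hermite cubic interpolant; both match $f_i, f_{i+1}, d_i, d_{i+1}$ at the cell ends. The denominator $Q_i+(P_i-Q_i)k$ of $R$ does not vanish for $k\in[0,1]$ when $P_iQ_i>0$. *)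

(* Defs.v *)
From Stdlib Require Import Reals Lra.
From Coquelicot Require Import Coquelicot.
Open Scope R_scope.

Definition Rinterp (h f d P Q : R) (k : R) : R :=
  f + d * h * k + (P ^ 2 * k ^ 2) / (Q + (P - Q) * k).

Definition Cinterp (h f d P Q : R) (k : R) : R :=
  f + d * h * k + (2 * P - Q) * k ^ 2 + (Q - P) * k ^ 3.

Definition Finterp (alpha h f d P Q : R) (k : R) : R :=
  alpha * Rinterp h f d P Q k + (1 - alpha) * Cinterp h f d P Q k.

Definition d2Fdx2 (alpha h f d P Q : R) (k : R) : R :=
  / (h ^ 2) * Derive_n (Finterp alpha h f d P Q) 2 k.

Definition Mi (P Q : R) : R := Rmax 2 (Rmax (Q / P) (P / Q)).

Definition alpha_star (P Q : R) : R :=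
  Mi P Q * (Mi P Q - 2) / (Mi P Q * (Mi P Q - 2) + 1).

Definition convexity_preserving (alpha h f d P Q : R) : Prop :=
  (P < 0 /\ Q < 0 -> forall k, 0 <= k <= 1 -> d2Fdx2 alpha h f d P Q k <= 0) /\
  (P > 0 /\ Q > 0 -> forall k, 0 <= k <= 1 -> d2Fdx2 alpha h f d P Q k >= 0).

(* Main.v *)
Require Import Defs.
From Stdlib Require Import Reals.
From Coquelicot Require Import Coquelicot.
Open Scope R_scope.
From Stdlib Require Import Lra Psatz.
Definition G (a P Q k : R) := 2*a*P^2*Q^2/(Q+(P-Q)*k)^3 + (1-a)*(2*(2*P-Q)+6*(Q-P)*k).
Definition F1 (alpha h d P Q t : R) := alpha*(d*h + P^2*(2*Q*t + (P-Q)*t^2)/(Q+(P-Q)*t)^2) + (1-alpha)*(d*h + 2*(2*P-Q)*t + 3*(Q-P)*t^2).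
Lemma d1 alpha h f d P Q t : Q+(P-Q)*t <> 0 -> is_derive (Finterp alpha h f d P Q) t (F1 alpha h d P Q t).
Proof. intros H. unfold Finterp, Rinterp, Cinterp, F1. auto_derive. auto. field. auto. Qed.
Lemma d2 alpha h d P Q t : Q+(P-Q)*t <> 0 -> is_derive (F1 alpha h d P Q) t (G alpha P Q t).
Proof. intros H. unfold G, F1. auto_derive. auto. field. auto. Qed.
Lemma loc P Q k : Q+(P-Q)*k <> 0 -> locally k (fun t => Q+(P-Q)*t <> 0).
Proof. intros H.
 assert (He: 0 < Rabs (Q+(P-Q)*k)/(Rabs (P-Q)+1)).
 { apply Rdiv_lt_0_compat. apply Rabs_pos_lt; auto. pose proof (Rabs_pos (P-Q)); lra. }
 exists (mkposreal _ He). intros t Ht. unfold ball in Ht; simpl in Ht.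
 unfold AbsRing_ball, abs, minus, plus, opp in Ht; simpl in Ht.
 intro E. pose proof (Rabs_pos (P-Q)).
 assert (E2: Q+(P-Q)*k = -((P-Q)*(t-k))) by lra.
 rewrite E2, Rabs_Ropp, Rabs_mult in Ht.
 apply Rmult_lt_compat_r with (r := Rabs (P-Q)+1) in Ht; [|lra].
 unfold Rdiv in Ht. rewrite Rmult_assoc, Rinv_l in Ht by lra.
 replace (t + -k) with (t-k) in Ht by ring. pose proof (Rabs_pos (t-k)). nra.
Qed.
Lemma d2F alpha h f d P Q k : Q+(P-Q)*k <> 0 -> Derive_n (Finterp alpha h f d P Q) 2 k = G alpha P Q k.
Proof. intros H. simpl.
 rewrite (Derive_ext_loc _ (F1 alpha h d P Q)).
 - apply is_derive_unique, d2; auto.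
 - generalize (loc P Q k H). apply filter_imp. intros t Ht. apply is_derive_unique, d1; auto.
Qed.

Lemma Mi_facts P Q : 2 <= Mi P Q /\ Q/P <= Mi P Q /\ P/Q <= Mi P Q /\
  (Mi P Q = 2 \/ Mi P Q = Q/P \/ Mi P Q = P/Q).
Proof. unfold Mi, Rmax. repeat destruct Rle_dec; lra. Qed.

Lemma Mi_neg P Q : P <> 0 -> Q <> 0 -> Mi (-P) (-Q) = Mi P Q.
Proof. intros. unfold Mi. replace (-Q / -P) with (Q/P) by (field; auto).
 replace (-P / -Q) with (P/Q) by (field; auto). auto. Qed.

Lemma G_neg a P Q k : Q+(P-Q)*k <> 0 -> G a (-P) (-Q) k = - G a P Q k.
Proof. intros. unfold G. field. split; auto. intro E; apply H; lra. Qed.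

Lemma G1 a P Q : P > 0 -> Q > 0 -> G a P Q 1 = (2*Q/(P/Q)) * (a*(P/Q-1)^2 - (P/Q)*(P/Q-2)).
Proof. intros. unfold G. field. lra. Qed.
Lemma G0 a P Q : P > 0 -> Q > 0 -> G a P Q 0 = (2*P/(Q/P)) * (a*(Q/P-1)^2 - (Q/P)*(Q/P-2)).
Proof. intros. unfold G. field. lra. Qed.

Lemma Gmono1 a P Q k : 0 <= a <= 1 -> 0 < Q <= P -> 0 <= k <= 1 -> G a P Q k >= G a P Q 1.
Proof. intros. unfold G.
 assert (HD: Q <= Q+(P-Q)*k <= P) by nra.
 replace (Q+(P-Q)*1) with P by ring.
 assert (Hi: /P^3 <= /(Q+(P-Q)*k)^3).
 { apply Rinv_le_contravar. apply pow_lt; lra. apply pow_incr; lra. }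
 unfold Rdiv. assert (Hc: 0 <= 2*a*P^2*Q^2) by (repeat apply Rmult_le_pos; try apply pow2_ge_0; lra).
 pose proof (Rmult_le_compat_l _ _ _ Hc Hi).
 assert (0 <= (1-a)*((P-Q)*(1-k))) by (apply Rmult_le_pos; nra).
 nra. Qed.
Lemma Gmono0 a P Q k : 0 <= a <= 1 -> 0 < P <= Q -> 0 <= k <= 1 -> G a P Q k >= G a P Q 0.
Proof. intros. unfold G.
 assert (HD: P <= Q+(P-Q)*k <= Q) by nra.
 replace (Q+(P-Q)*0) with Q by ring.
 assert (Hi: /Q^3 <= /(Q+(P-Q)*k)^3).
 { apply Rinv_le_contravar. apply pow_lt; lra. apply pow_incr; lra. }
 unfold Rdiv. assert (Hc: 0 <= 2*a*P^2*Q^2) by (repeat apply Rmult_le_pos; try apply pow2_ge_0; lra).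
 pose proof (Rmult_le_compat_l _ _ _ Hc Hi).
 assert (0 <= (1-a)*((Q-P)*k)) by (apply Rmult_le_pos; nra).
 nra. Qed.

Lemma key a P Q : 0 <= a <= 1 -> P > 0 -> Q > 0 ->
  ((forall k, 0 <= k <= 1 -> G a P Q k >= 0) <->
   a * (Mi P Q * (Mi P Q - 2) + 1) >= Mi P Q * (Mi P Q - 2)).
Proof. intros Ha HP HQ. destruct (Mi_facts P Q) as (H2 & Hq & Hp & Hc).
 set (m := Mi P Q) in *.
 assert (Hy: P/Q > 0) by (apply Rdiv_lt_0_compat; lra).
 assert (Hz: Q/P > 0) by (apply Rdiv_lt_0_compat; lra).
 split.
 - intros Hk. destruct Hc as [E|[E|E]]; rewrite E.
   + nra.
   + specialize (Hk 0 ltac:(lra)). rewrite G0 in Hk by lra.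
     assert (0 < 2*P/(Q/P)) by (apply Rdiv_lt_0_compat; lra).
     assert (0 <= a*(Q/P-1)^2 - (Q/P)*(Q/P-2)).
     { destruct (Rle_dec 0 (a*(Q/P-1)^2 - (Q/P)*(Q/P-2))); auto. nra. }
     nra.
   + specialize (Hk 1 ltac:(lra)). rewrite G1 in Hk by lra.
     assert (0 < 2*Q/(P/Q)) by (apply Rdiv_lt_0_compat; lra).
     assert (0 <= a*(P/Q-1)^2 - (P/Q)*(P/Q-2)).
     { destruct (Rle_dec 0 (a*(P/Q-1)^2 - (P/Q)*(P/Q-2))); auto. nra. }
     nra.
 - intros Hm k Hk. destruct (Rle_dec Q P).
   + eapply Rge_trans. apply Gmono1; lra. rewrite G1 by lra.
     assert (0 < 2*Q/(P/Q)) by (apply Rdiv_lt_0_compat; lra).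
     set (y := P/Q) in *.
     assert (y*(y-2) <= m*(m-2)) by nra.
     assert (0 <= a*(y-1)^2 - y*(y-2)) by nra. nra.
   + eapply Rge_trans. apply Gmono0; lra. rewrite G0 by lra.
     assert (0 < 2*P/(Q/P)) by (apply Rdiv_lt_0_compat; lra).
     set (y := Q/P) in *.
     assert (y*(y-2) <= m*(m-2)) by nra.
     assert (0 <= a*(y-1)^2 - y*(y-2)) by nra. nra.
Qed.

Lemma as_iff a P Q : a >= alpha_star P Q <-> a * (Mi P Q * (Mi P Q - 2) + 1) >= Mi P Q * (Mi P Q - 2).
Proof. destruct (Mi_facts P Q) as (H2 & _). unfold alpha_star.
 set (x := Mi P Q * (Mi P Q - 2)). assert (Hx: 0 <= x) by (unfold x; nra).
 split; intro H.
 - apply Rge_le in H. apply Rle_ge. apply Rle_div_l in H; lra.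
 - apply Rle_ge. apply Rle_div_l; lra.
Qed.

Lemma d2pos alpha h f d P Q k : 0 < h -> P > 0 -> Q > 0 -> 0 <= k <= 1 ->
  (d2Fdx2 alpha h f d P Q k >= 0 <-> G alpha P Q k >= 0).
Proof. intros. unfold d2Fdx2. rewrite d2F by nra.
 assert (0 < / h^2) by (apply Rinv_0_lt_compat, pow_lt; lra). split; intro; nra. Qed.

Lemma d2neg alpha h f d P Q k : 0 < h -> P < 0 -> Q < 0 -> 0 <= k <= 1 ->
  (d2Fdx2 alpha h f d P Q k <= 0 <-> G alpha (-P) (-Q) k >= 0).
Proof. intros. unfold d2Fdx2. rewrite d2F by nra. rewrite G_neg by nra.
 assert (0 < / h^2) by (apply Rinv_0_lt_compat, pow_lt; lra). split; intro; nra. Qed.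

Theorem mainTheorem1 (h f d P Q : R) (Hh : 0 < h) (HPQ : P * Q > 0) :
  (0 <= alpha_star P Q < 1) /\
  (forall alpha, 0 <= alpha <= 1 ->
     (convexity_preserving alpha h f d P Q <-> alpha >= alpha_star P Q)) /\
  (1 / 2 <= Q / P <= 2 -> alpha_star P Q = 0).
Proof.
 assert (HP0 : P <> 0) by (intro E; subst; lra).
 assert (HQ0 : Q <> 0) by (intro E; subst; lra).
 split; [|split].
 - destruct (Mi_facts P Q) as (H2 & _). unfold alpha_star.
   set (x := Mi P Q * (Mi P Q - 2)). assert (0 <= x) by (unfold x; nra).
   split. apply Rdiv_le_0_compat; lra.
   apply Rlt_div_l; lra.
 - intros a Ha. rewrite as_iff. unfold convexity_preserving.
   assert (HS: (P > 0 /\ Q > 0) \/ (P < 0 /\ Q < 0)).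
   { destruct (Rlt_or_le 0 P); [left|right]; nra. }
   destruct HS as [[HP HQ]|[HP HQ]].
   + rewrite <- key by lra. split.
     * intros [_ H] k Hk. apply (d2pos a h f d P Q k); auto.
     * intro H. split. lra. intros _ k Hk. apply (d2pos a h f d P Q k); auto.
   + rewrite <- (Mi_neg P Q) by auto. rewrite <- key by lra. split.
     * intros [H _] k Hk. apply (d2neg a h f d P Q k); auto.
     * intro H. split. intros _ k Hk. apply (d2neg a h f d P Q k); auto. lra.
 - intros [H1 H2]. assert (HPQ' : P/Q = / (Q/P)) by (field; auto).
   assert (Hq : 0 < Q/P) by lra.
   assert (P/Q <= 2).
   { rewrite HPQ'. apply (Rmult_le_reg_r (Q/P)); auto. rewrite Rinv_l by lra. lra. }
   assert (E: Mi P Q = 2) by (unfold Mi, Rmax; repeat destruct Rle_dec; lra).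
   unfold alpha_star. rewrite E. field_simplify; lra.
Qed.
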